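(* For any fixed $s\in[0,1)$, as $n\to\infty$, $$\theta^*_n(s)=\frac{1}{1+\frac{\kappa}{(n-1)(1-s)}}+o\Big(\frac1n\Big),$$ where $\kappa\approx0.80435$ is the positive solution of $\sum_{k\ge1}\frac{\kappa^k}{k!\,k}=1$.
   Context: For $n\ge2$ and $s\in[0,1)$, $\theta^*_n(s)$ is the unique solution in $(0,1)$ of $\int_s^1\frac{(1-t+t\theta^*_n(s))^{n-1}-\theta^*_n(s)^{n-1}}{1-t}\,\mathrm dt=\theta^*_n(s)^{n-1}$. *)

(* Defs.v *)
From Stdlib Require Import Reals Factorial.
From Coquelicot Require Import Coquelicot.
Open Scope R_scope.

(* Integrand of the defining equation of theta*_n(s):
   ((1 - t + t*th)^(n-1) - th^(n-1)) / (1 - t).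
   (At t = 1 this has a removable singularity; a single point does not
   affect the Riemann integral.) *)
Definition theta_integrand (n : nat) (th t : R) : R :=
  ((1 - t + t * th) ^ (n - 1) - th ^ (n - 1)) / (1 - t).

Definition is_theta_star (n : nat) (s th : R) : Prop :=
  0 < th < 1 /\ is_RInt (theta_integrand n th) s 1 (th ^ (n - 1)).

Definition is_kappa (kappa : R) : Prop :=
  0 < kappa /\
  is_series (fun k : nat => kappa ^ (S k) / (INR (Factorial.fact (S k)) * INR (S k))) 1.

(* Main.v *)
Require Import Defs.
From Stdlib Require Import Reals Lra Lia Factorial.
From Coquelicot Require Import Coquelicot.
Open Scope R_scope.

Lemma is_derive_sumf (f df : nat -> R -> R) N x :
  (forall i, is_derive (f i) x (df i x)) ->
  is_derive (fun t => sum_f_R0 (fun i => f i t) N) x (sum_f_R0 (fun i => df i x) N).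
Proof.
  intros H; induction N as [|N IH]; simpl.
  - apply H.
  - apply (is_derive_plus (fun t => sum_f_R0 (fun i => f i t) N) (f (S N))); [exact IH| apply H].
Qed.

Lemma cont_sumf (f : nat -> R -> R) N x :
  (forall i, continuous (f i) x) ->
  continuous (fun t => sum_f_R0 (fun i => f i t) N) x.
Proof.
  intros H; induction N as [|N IH]; simpl.
  - apply H.
  - apply (continuous_plus (fun t => sum_f_R0 (fun i => f i t) N) (f (S N))); [exact IH| apply H].
Qed.

Definition Qt m th t := sum_f_R0 (fun i => Binomial.C m (S i) * th^(m - S i) * (1-th)^(S i) * (1-t)^i) (pred m).
Definition Pt m th t := - sum_f_R0 (fun i => Binomial.C m (S i) * th^(m - S i) * (1-th)^(S i) * (1-t)^(S i) / INR (S i)) (pred m).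

Lemma Pt_der m th t : is_derive (Pt m th) t (Qt m th t).
Proof.
  unfold Pt, Qt.
  replace (sum_f_R0 _ _) with (- sum_f_R0 (fun i => - (Binomial.C m (S i) * th^(m - S i) * (1-th)^(S i) * (1-t)^i)) (pred m)).
  2:{ rewrite <- (Rmult_1_l (sum_f_R0 (fun i => - _) _)).
      replace (-(1 * _)) with (-1 * sum_f_R0 (fun i => - (Binomial.C m (S i) * th^(m - S i) * (1-th)^(S i) * (1-t)^i)) (pred m)) by ring.
      rewrite scal_sum. apply sum_eq; intros; ring. }
  apply (is_derive_opp (fun t => sum_f_R0 (fun i => Binomial.C m (S i) * th^(m - S i) * (1-th)^(S i) * (1-t)^(S i) / INR (S i)) (pred m))).
  apply (is_derive_sumf (fun i t => Binomial.C m (S i) * th^(m - S i) * (1-th)^(S i) * (1-t)^(S i) / INR (S i))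
     (fun i t => - (Binomial.C m (S i) * th^(m - S i) * (1-th)^(S i) * (1-t)^i))).
  intros i. auto_derive; auto. simpl pred.
  change (match i with 0%nat => 1 | S _ => INR i + 1 end) with (INR (S i)). replace (1 + - t) with (1 - t) by ring. simpl pow. field. apply not_0_INR. lia.
Qed.

Lemma Qt_cont m th t : continuous (Qt m th) t.
Proof.
  unfold Qt. apply cont_sumf. intros i. apply (ex_derive_continuous (K:=R_AbsRing) (V:=R_NormedModule) (fun t => Binomial.C m (S i) * th^(m - S i) * (1-th)^(S i) * (1-t)^i)). auto_derive. auto.
Qed.

Lemma C_m0 m : Binomial.C m 0 = 1.
Proof. unfold Binomial.C. rewrite Nat.sub_0_r. simpl (fact 0). simpl INR.
  field. apply INR_fact_neq_0. Qed.

Lemma integrand_eq m th t : (1 <= m)%nat -> t <> 1 ->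
  ((1-t+t*th)^m - th^m)/(1-t) = Qt m th t.
Proof.
  intros Hm Ht.
  replace (1-t+t*th) with ((1-t)*(1-th) + th) by ring.
  rewrite binomial, decomp_sum by lia.
  rewrite C_m0, Nat.sub_0_r. simpl (_ ^ 0).
  replace (1 * 1 * th ^ m + _ - th ^ m) with
     ((1-t) * Qt m th t).
  { field. lra. }
  unfold Qt. rewrite scal_sum. match goal with |- _ = ?a + ?b - ?c => replace (a+b-c) with b by ring end. apply sum_eq. intros i Hi.
  rewrite Rpow_mult_distr. simpl pow. ring.
Qed.

Lemma integral_id m th s : (1 <= m)%nat -> s < 1 ->
  is_RInt (fun t => ((1-t+t*th)^m - th^m)/(1-t)) s 1 (Pt m th 1 - Pt m th s).
Proof.
  intros Hm Hs.
  apply is_RInt_ext with (Qt m th).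
  { intros x Hx. rewrite Rmin_left in Hx by lra. rewrite Rmax_right in Hx by lra.
    rewrite integrand_eq; auto; lra. }
  apply (is_RInt_derive (Pt m th) (Qt m th)).
  - intros; apply Pt_der.
  - intros; apply Qt_cont.
Qed.

Definition G m y := sum_f_R0 (fun i => Binomial.C m (S i) * y^(S i) / INR (S i)) (pred m).

Lemma theta_eq n s th : (2 <= n)%nat -> s < 1 -> is_theta_star n s th ->
  G (n-1) ((1-th)*(1-s)/th) = 1.
Proof.
  intros Hn Hs [Hth HI].
  set (m := (n-1)%nat) in *.
  assert (Hm : (1 <= m)%nat) by (unfold m; lia).
  pose proof (integral_id m th s Hm Hs) as H2.
  unfold theta_integrand in HI. fold m in HI.
  pose proof (is_RInt_unique (V:=R_CompleteNormedModule) _ _ _ _ HI) as HI'. pose proof (is_RInt_unique (V:=R_CompleteNormedModule) _ _ _ _ H2) as H2'. clear H2. rename H2' into H2.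
  rewrite HI' in H2. clear HI HI'.
  assert (HP1 : Pt m th 1 = 0).
  { unfold Pt. rewrite sum_eq_R0. apply Ropp_0. intros i _. rewrite Rminus_diag, pow_i by lia. unfold Rdiv. ring. }
  rewrite HP1 in H2. unfold Pt in H2.
  assert (Hthm : th ^ m <> 0) by (apply pow_nonzero; lra).
  apply (Rmult_eq_reg_l (th^m)); auto. rewrite Rmult_1_r.
  transitivity (sum_f_R0 (fun i => Binomial.C m (S i) * th ^ (m - S i) * (1 - th) ^ S i * (1 - s) ^ S i / INR (S i)) (pred m)).
  2:{ rewrite H2. ring. }
  unfold G. rewrite scal_sum.
  apply sum_eq. intros i Hi.
  replace (th ^ m) with (th ^ (m - S i) * th ^ (S i)).
  2:{ rewrite <- pow_add. f_equal. lia. }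
  unfold Rdiv. rewrite !Rpow_mult_distr, pow_inv.
  assert (th ^ S i <> 0) by (apply pow_nonzero; lra).
  field. split; auto. apply not_0_INR. lia.
Qed.

Lemma div_le1 a b : 0 < b -> a <= b -> a / b <= 1.
Proof. intros. apply Rmult_le_reg_r with b; auto. unfold Rdiv. rewrite Rmult_assoc, Rinv_l by lra. lra. Qed.

Definition D m k := INR (fact m) / (INR (fact (m-k)) * INR m ^ k).
Definition ak x i := x ^ (S i) / (INR (fact (S i)) * INR (S i)).

Lemma D_0 m : (1 <= m)%nat -> D m 0 = 1.
Proof. intros. unfold D. rewrite Nat.sub_0_r. simpl pow. field. apply INR_fact_neq_0. Qed.

Lemma D_rec m k : (k < m)%nat -> D m (S k) = D m k * (INR m - INR k) / INR m.
Proof.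
  intros H. unfold D.
  replace (m - k)%nat with (S (m - S k)) by lia.
  rewrite fact_simpl, mult_INR.
  replace (INR (S (m - S k))) with (INR m - INR k).
  2:{ replace (S (m - S k)) with (m - k)%nat by lia. rewrite minus_INR; [ring|lia]. }
  assert (INR m - INR k <> 0).
  { assert (INR k < INR m) by (apply lt_INR; lia). lra. }
  assert (INR m <> 0) by (apply not_0_INR; lia).
  assert (INR (fact (m - S k)) <> 0) by apply INR_fact_neq_0. assert (INR m ^ k <> 0) by (apply pow_nonzero; auto).
  simpl pow. field. repeat split; auto.
Qed.

Lemma D_bounds m k : (1 <= m)%nat -> (k <= m)%nat ->
  0 <= D m k <= 1 /\ 1 - INR k ^ 2 / INR m <= D m k.
Proof.
  intros Hm. induction k as [|k IH]; intros Hk.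
  - rewrite D_0 by auto. simpl INR. assert (0 < INR m) by (apply lt_0_INR; lia).
    split; [lra|]. unfold Rdiv. simpl. nra.
  - destruct IH as [[H0 H1] H2]; [lia|].
    rewrite D_rec by lia.
    assert (Hmk : INR k < INR m) by (apply lt_INR; lia).
    assert (0 <= INR k) by apply pos_INR.
    assert (0 < INR m) by (apply lt_0_INR; lia).
    set (x := INR m) in *. set (y := INR k) in *. rewrite S_INR. fold y.
    assert (Hq: 0 <= (x - y)/x <= 1).
    { split. apply Rdiv_le_0_compat; lra. apply div_le1; lra. }
    replace (D m k * (x - y) / x) with (D m k * ((x-y)/x)) by (field; lra).
    split. split. apply Rmult_le_pos; lra. rewrite <- (Rmult_1_r 1); apply Rmult_le_compat; lra.
    destruct (Rle_dec 0 (1 - y^2/x)) as [Hp|Hn].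
    + replace ((x-y)/x) with (1 - y/x) by (field; lra).
      replace (1 - (y+1)^2/x) with ((1 - y^2/x) - y/x - (2*y+1)/x + y/x) by (field; lra).
      assert (0 <= y/x) by (apply Rdiv_le_0_compat; lra).
      assert (0 <= (2*y+1)/x) by (apply Rdiv_le_0_compat; lra).
      assert (y/x <= 1) by (apply div_le1; lra).
      assert (D m k * (1 - y/x) >= (1 - y^2/x) * (1 - y/x)) by nra.
      assert (y / x <= (2*y+1)/x) by (unfold Rdiv; apply Rmult_le_compat_r; [left; apply Rinv_0_lt_compat; lra| lra]).
      nra.
    + assert (1 - (y+1)^2/x <= 1 - y^2/x).
      { assert (y^2/x <= (y+1)^2/x) by (unfold Rdiv; apply Rmult_le_compat_r; [left; apply Rinv_0_lt_compat; lra| nra]). lra. }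
      nra.
Qed.

Lemma G_D m x : (1 <= m)%nat ->
  G m (x / INR m) = sum_f_R0 (fun i => D m (S i) * ak x i) (pred m).
Proof.
  intros Hm. unfold G. apply sum_eq. intros i Hi. unfold D, ak, Binomial.C.
  assert (INR m <> 0) by (apply not_0_INR; lia).
  unfold Rdiv. rewrite Rpow_mult_distr, pow_inv.
  field. repeat split; try apply INR_fact_neq_0. apply not_0_INR; lia. apply pow_nonzero; auto.
Qed.
Lemma sum_mono (f : nat -> R) N M : (forall i, 0 <= f i) -> (N <= M)%nat ->
  sum_f_R0 f N <= sum_f_R0 f M.
Proof.
  intros Hf HNM. induction M as [|M IH].
  - replace N with 0%nat by lia. lra.
  - destruct (Nat.eq_dec N (S M)) as [->|Hne]; [lra|].
    simpl. specialize (IH ltac:(lia)). specialize (Hf (S M)). lra.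
Qed.

Lemma sum_ge_first (f : nat -> R) N : (forall i, 0 <= f i) -> f 0%nat <= sum_f_R0 f N.
Proof. intros Hf. apply (sum_mono f 0 N Hf). lia. Qed.

Lemma ak_nonneg x i : 0 <= x -> 0 <= ak x i.
Proof. intros. unfold ak. apply Rdiv_le_0_compat. apply pow_le; auto.
  apply Rmult_lt_0_compat. apply lt_0_INR, lt_O_fact. apply lt_0_INR; lia. Qed.

Lemma kappa_partial kappa N : is_kappa kappa -> sum_f_R0 (ak kappa) N <= 1.
Proof.
  intros [Hk Hs].
  assert (Hl : is_lim_seq (sum_n (ak kappa)) 1) by exact Hs.
  assert (Hc : is_lim_seq (fun _ : nat => sum_f_R0 (ak kappa) N) (sum_f_R0 (ak kappa) N)) by apply is_lim_seq_const.
  assert (He : eventually (fun n => sum_f_R0 (ak kappa) N <= sum_n (ak kappa) n)).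
  { exists N. intros n Hn. rewrite sum_n_Reals. apply sum_mono. intros; apply ak_nonneg. lra. exact Hn. }
  pose proof (is_lim_seq_le_loc _ _ _ _ He Hc Hl) as H.
  exact H.
Qed.

Lemma kappa_lt1 kappa : is_kappa kappa -> kappa < 1.
Proof.
  intros Hk. pose proof (kappa_partial kappa 1 Hk) as H. destruct Hk as [Hk _].
  simpl in H. unfold ak in H. simpl in H. 
  assert (kappa * 1 / (1 * 1) + kappa * (kappa * 1) / ((1 + 1) * (1 + 1)) = kappa + kappa^2/4) by field.
  nra.
Qed.

Lemma weighted_bound kappa N : 0 < kappa < 1 ->
  sum_f_R0 (fun i => INR (S i) ^ 2 * ak kappa i) N <= 1 / (1 - kappa).
Proof.
  intros Hk.
  apply Rle_trans with (sum_f_R0 (fun i => kappa ^ i) N).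
  - apply sum_Rle. intros i _. unfold ak.
    rewrite fact_simpl, mult_INR.
    assert (H1 : 1 <= INR (fact i)) by (apply (le_INR 1); apply lt_O_fact).
    assert (H2 : 0 < INR (S i)) by (apply lt_0_INR; lia).
    assert (H3 : 0 <= kappa ^ i) by (apply pow_le; lra).
    replace (INR (S i) ^ 2 * (kappa ^ S i / (INR (S i) * INR (fact i) * INR (S i))))
      with (kappa * (kappa ^ i / INR (fact i))) by (change (kappa ^ S i) with (kappa * kappa^i); field; lra).
    assert (kappa ^ i / INR (fact i) <= kappa ^ i).
    { unfold Rdiv. rewrite <- (Rmult_1_r (kappa ^ i)) at 2. apply Rmult_le_compat_l; auto.
      rewrite <- Rinv_1. apply Rinv_le_contravar; lra. }
    assert (0 <= kappa ^ i / INR (fact i)) by (apply Rdiv_le_0_compat; lra).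
    nra.
  - rewrite tech3 by lra.
    assert (0 < kappa ^ S N) by (apply pow_lt; lra).
    unfold Rdiv. apply Rmult_le_compat_r. left; apply Rinv_0_lt_compat; lra. lra.
Qed.

Lemma g_bounds m kappa : (1 <= m)%nat -> is_kappa kappa ->
  sum_f_R0 (ak kappa) (pred m) - (1 / (1 - kappa)) / INR m <= G m (kappa / INR m) <= 1
  /\ kappa <= G m (kappa / INR m).
Proof.
  intros Hm HK. pose proof (kappa_lt1 _ HK) as Hk1. pose proof (kappa_partial kappa (pred m) HK) as Hp.
  destruct HK as [Hk0 _].
  assert (Hmpos : 0 < INR m) by (apply lt_0_INR; lia).
  rewrite G_D by auto.
  split; [split|].
  - apply Rle_trans with (sum_f_R0 (fun i => ak kappa i - (INR (S i) ^ 2 * ak kappa i) * / INR m) (pred m)).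
    + rewrite minus_sum, <- scal_sum.
      pose proof (weighted_bound kappa (pred m) ltac:(lra)).
      assert (/ INR m * sum_f_R0 (fun i => INR (S i) ^ 2 * ak kappa i) (pred m) <= / INR m * (1 / (1-kappa))).
      { apply Rmult_le_compat_l; auto. left; apply Rinv_0_lt_compat; auto. }
      unfold Rdiv at 2. lra.
    + apply sum_Rle. intros i Hi.
      destruct (D_bounds m (S i) Hm ltac:(lia)) as [_ H2].
      pose proof (ak_nonneg kappa i ltac:(lra)).
      replace (ak kappa i - (INR (S i) ^ 2 * ak kappa i) * / INR m) with ((1 - INR (S i) ^ 2 / INR m) * ak kappa i) by (field; lra).
      apply Rmult_le_compat_r; auto.
  - apply Rle_trans with (sum_f_R0 (ak kappa) (pred m)); auto.
    apply sum_Rle. intros i Hi.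
    destruct (D_bounds m (S i) Hm ltac:(lia)) as [[H0 H1] _].
    pose proof (ak_nonneg kappa i ltac:(lra)).
    rewrite <- (Rmult_1_l (ak kappa i)) at 2. apply Rmult_le_compat_r; auto.
  - eapply Rle_trans; [| apply (sum_ge_first (fun i => D m (S i) * ak kappa i))].
    + rewrite D_rec, D_0 by lia. unfold ak. simpl. right; field; lra.
    + intros i. destruct (Nat.le_gt_cases (S i) m) as [Hle|Hgt].
      * destruct (D_bounds m (S i) Hm Hle) as [[H0 H1] _].
        apply Rmult_le_pos; auto. apply ak_nonneg; lra.
      * unfold D. replace (m - S i)%nat with 0%nat by lia.
        apply Rmult_le_pos; [|apply ak_nonneg; lra].
        apply Rdiv_le_0_compat. apply pos_INR.
        apply Rmult_lt_0_compat. apply lt_0_INR, lt_O_fact. apply pow_lt; auto.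
Qed.

Lemma G_scale_ge m c y : 1 <= c -> 0 <= y -> c * G m y <= G m (c * y).
Proof.
  intros Hc Hy. unfold G. rewrite scal_sum. apply sum_Rle. intros i _.
  assert (0 <= Binomial.C m (S i) * y ^ S i / INR (S i)).
  { apply Rdiv_le_0_compat; [|apply lt_0_INR; lia]. apply Rmult_le_pos; [|apply pow_le; auto].
    unfold Binomial.C. apply Rdiv_le_0_compat. apply pos_INR. apply Rmult_lt_0_compat; apply lt_0_INR, lt_O_fact. }
  rewrite Rpow_mult_distr.
  assert (c <= c ^ S i). { simpl. pose proof (pow_R1_Rle c i Hc). nra. }
  replace (Binomial.C m (S i) * (c ^ S i * y ^ S i) / INR (S i)) with (c ^ S i * (Binomial.C m (S i) * y ^ S i / INR (S i))) by (field; apply not_0_INR; lia).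
  rewrite Rmult_comm. apply Rmult_le_compat_r; auto.
Qed.

Lemma G_scale_le m c y : 0 <= c <= 1 -> 0 <= y -> G m (c * y) <= c * G m y.
Proof.
  intros Hc Hy. unfold G. rewrite scal_sum. apply sum_Rle. intros i _.
  assert (0 <= Binomial.C m (S i) * y ^ S i / INR (S i)).
  { apply Rdiv_le_0_compat; [|apply lt_0_INR; lia]. apply Rmult_le_pos; [|apply pow_le; auto].
    unfold Binomial.C. apply Rdiv_le_0_compat. apply pos_INR. apply Rmult_lt_0_compat; apply lt_0_INR, lt_O_fact. }
  rewrite Rpow_mult_distr.
  assert (c ^ S i <= c). { simpl. assert (c ^ i <= 1) by (rewrite <- (pow1 i); apply pow_incr; lra). nra. }
  replace (Binomial.C m (S i) * (c ^ S i * y ^ S i) / INR (S i)) with (c ^ S i * (Binomial.C m (S i) * y ^ S i / INR (S i))) by (field; apply not_0_INR; lia).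
  rewrite (Rmult_comm _ c). apply Rmult_le_compat_r; auto.
Qed.

Lemma key n s kappa th : (2 <= n)%nat -> 0 <= s < 1 -> is_kappa kappa -> is_theta_star n s th ->
  - (2 * kappa / (1 - s) * (/ G (n-1) (kappa / INR (n-1)) - 1))
  <= INR n * (th - 1 / (1 + kappa / ((INR n - 1) * (1 - s)))) <= 0.
Proof.
  intros Hn Hs HK Hth.
  pose proof (theta_eq n s th Hn ltac:(lra) Hth) as HG.
  set (m := (n-1)%nat) in *.
  assert (Hm : (1 <= m)%nat) by (unfold m; lia).
  destruct (g_bounds m kappa Hm HK) as [[_ Hg1] Hgk].
  set (g := G m (kappa / INR m)) in *.
  destruct HK as [Hk0 _]. destruct Hth as [[Ht0 Ht1] _].
  assert (HM : INR m = INR n - 1) by (unfold m; rewrite minus_INR by lia; simpl; ring).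
  rewrite <- HM.
  set (M := INR m) in *.
  assert (HMp : 1 <= M) by (unfold M; apply (le_INR 1); auto).
  set (r := 1 - s) in *.
  assert (Hr : 0 < r) by (unfold r; lra).
  set (y := (1 - th) * r / th) in *.
  assert (Hy : 0 < y) by (unfold y; apply Rdiv_lt_0_compat; nra).
  set (z := M * y).
  assert (Hz : 0 < z) by (unfold z; nra).
  assert (Hyz : y = z / M) by (unfold z; field; lra).
  assert (Hgp : 0 < g) by lra.
  assert (Hzk : kappa <= z).
  { destruct (Rle_dec kappa z) as [H|H]; auto. exfalso.
    set (c := z / kappa).
    assert (Hc : 0 <= c <= 1). { unfold c; split. apply Rdiv_le_0_compat; lra. apply div_le1; lra. }
    assert (Hc' : c < 1). { unfold c. apply Rmult_lt_reg_r with kappa; auto. unfold Rdiv. rewrite Rmult_assoc, Rinv_l by lra. lra. }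
    assert (Hyc : y = c * (kappa / M)) by (rewrite Hyz; unfold c; field; lra).
    pose proof (G_scale_le m c (kappa / M) Hc ltac:(apply Rdiv_le_0_compat; lra)) as HH.
    rewrite <- Hyc, HG in HH. fold g in HH. nra. }
  assert (Hzg : z * g <= kappa).
  { set (c := z / kappa).
    assert (Hc : 1 <= c). { unfold c. apply Rmult_le_reg_r with kappa; auto. unfold Rdiv. rewrite Rmult_assoc, Rinv_l by lra. lra. }
    assert (Hyc : y = c * (kappa / M)) by (rewrite Hyz; unfold c; field; lra).
    pose proof (G_scale_ge m c (kappa / M) Hc ltac:(apply Rdiv_le_0_compat; lra)) as HH.
    rewrite <- Hyc, HG in HH. fold g in HH.
    replace (z * g) with (kappa * (c * g)) by (unfold c; field; lra). nra. }
  assert (Hzb : z - kappa <= kappa * (/ g - 1)).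
  { apply Rmult_le_reg_r with g; auto. replace (kappa * (/ g - 1) * g) with (kappa - kappa * g) by (field; lra). nra. }
  assert (Hth_eq : th = M * r / (M * r + z)).
  { assert (th * (r + y) = r) by (unfold y; field; lra).
    rewrite Hyz in H. apply Rmult_eq_reg_r with (M * r + z). 2: nra.
    unfold Rdiv. rewrite Rmult_assoc, Rinv_l by nra. rewrite Rmult_1_r.
    replace (th * (M*r+z)) with (M * (th * (r + z * / M))) by (field; lra). unfold Rdiv in H. rewrite H. ring. }
  assert (Hd : th - 1 / (1 + kappa / (M * r)) = M * r * (kappa - z) / ((M * r + z) * (M * r + kappa))).
  { rewrite Hth_eq. field. repeat split; nra. }
  rewrite Hd.
  assert (HA : 0 < M * r) by nra.
  set (A := M * r) in *.
  assert (HnM : INR n = M + 1) by lra.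
  rewrite HnM.
  assert (HP : A * A <= (A + z) * (A + kappa)) by nra.
  split.
  -
    assert (H1 : A * (z - kappa) / ((A + z) * (A + kappa)) <= (z - kappa) / A).
    { replace ((z-kappa)/A) with (A*(z-kappa)/(A*A)) by (field; lra).
      unfold Rdiv. apply Rmult_le_compat_l. nra. apply Rinv_le_contravar; nra. }
    assert (H2 : (M + 1) * ((z - kappa) / A) <= 2 * (z - kappa) / r).
    { unfold A. replace ((M + 1) * ((z - kappa) / (M * r))) with ((M+1)/M * ((z - kappa) / r)) by (field; lra).
      replace (2 * (z - kappa) / r) with (2 * ((z - kappa) / r)) by (field; lra).
      apply Rmult_le_compat_r. apply Rdiv_le_0_compat; lra.
      apply Rmult_le_reg_r with M. lra. unfold Rdiv. rewrite Rmult_assoc, Rinv_l by lra. lra. }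
    assert (H3 : 0 <= (z - kappa) / A) by (apply Rdiv_le_0_compat; lra).
    replace (A * (kappa - z) / ((A + z) * (A + kappa))) with (- (A * (z - kappa) / ((A + z) * (A + kappa)))) by (field; nra).
    assert (H4 : 2 * (z - kappa) / r <= 2 * kappa / r * (/ g - 1)).
    { replace (2 * kappa / r * (/ g - 1)) with (2 * (kappa * (/g - 1)) / r) by (field; lra).
      unfold Rdiv. apply Rmult_le_compat_r. left; apply Rinv_0_lt_compat; lra. lra. }
    assert (0 <= M + 1) by lra.
    assert (H5 : (M + 1) * (A * (z - kappa) / ((A + z) * (A + kappa))) <= (M+1) * ((z - kappa) / A)) by (apply Rmult_le_compat_l; auto).
    lra.
  - assert (0 <= A * (z - kappa) / ((A + z) * (A + kappa))).
    { apply Rdiv_le_0_compat; nra. }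
    replace (A * (kappa - z) / ((A + z) * (A + kappa))) with (- (A * (z - kappa) / ((A + z) * (A + kappa)))) by (field; nra).
    nra.
Qed.

Theorem mainTheorem16 :
  forall (s kappa : R) (theta : nat -> R),
    0 <= s < 1 ->
    is_kappa kappa ->
    (forall n : nat, (2 <= n)%nat -> is_theta_star n s (theta n)) ->
    is_lim_seq
      (fun n : nat =>
         INR n * (theta n - 1 / (1 + kappa / ((INR n - 1) * (1 - s)))))
      0.
Proof.
  intros s kappa theta Hs HK Hth.
  pose proof (kappa_lt1 _ HK) as Hk1.
  assert (Hk0 : 0 < kappa) by (destruct HK; auto).
  set (g := fun n : nat => G (n-1) (kappa / INR (n-1))).
  set (B := 1 / (1 - kappa)).
  assert (HP : is_lim_seq (fun n => sum_f_R0 (ak kappa) n) 1).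
  { destruct HK as [_ Hser]. apply is_lim_seq_ext with (sum_n (ak kappa)).
    intros; apply sum_n_Reals. exact Hser. }
  assert (HI : is_lim_seq (fun n => B / INR (n + 1)) 0).
  { assert (H1 : is_lim_seq (fun n => INR (n + 1)) p_infty).
    { apply (is_lim_seq_incr_n INR 1 p_infty). apply is_lim_seq_INR. }
    pose proof (is_lim_seq_inv _ _ H1 ltac:(discriminate)) as H2.
    pose proof (is_lim_seq_scal_l _ B _ H2) as H3. simpl in H3.
    replace (Finite 0) with (Finite (B * 0)) by (f_equal; ring). exact H3. }
  assert (Hg : is_lim_seq g 1).
  { apply is_lim_seq_le_le_loc with
      (u := fun n => sum_f_R0 (ak kappa) (pred (n-1)) - B / INR (n-1))
      (w := fun _ => 1).
    - exists 2%nat. intros n Hn. unfold g.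
      destruct (g_bounds (n-1) kappa ltac:(lia) HK) as [[H1 H2] _]. split; auto.
    - apply (is_lim_seq_incr_n _ 2).
      apply is_lim_seq_ext with (fun n => sum_f_R0 (ak kappa) n - B / INR (n + 1)).
      { intros n. replace (pred (n + 2 - 1)) with n by lia. replace (n + 2 - 1)%nat with (n+1)%nat by lia. reflexivity. }
      replace (Finite 1) with (Finite (1 - 0)) by (f_equal; ring).
      apply is_lim_seq_minus'; auto.
    - apply is_lim_seq_const. }
  set (w := fun n => 2 * kappa / (1 - s) * (/ g n - 1)).
  assert (Hw : is_lim_seq w 0).
  { pose proof (is_lim_seq_inv _ _ Hg ltac:(injection; lra)) as H1. simpl in H1.
    replace (/ 1) with 1 in H1 by (field).
    pose proof (is_lim_seq_minus' _ (fun _ => 1) _ _ H1 (is_lim_seq_const 1)) as H2.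
    pose proof (is_lim_seq_scal_l _ (2 * kappa / (1 - s)) _ H2) as H3. simpl in H3.
    replace (Finite 0) with (Finite (2 * kappa / (1 - s) * (1 - 1))) by (f_equal; ring). exact H3. }
  apply is_lim_seq_le_le_loc with (u := fun n => - w n) (w := fun _ => 0).
  - exists 2%nat. intros n Hn. unfold w, g. apply key; auto.
  - replace (Finite 0) with (Rbar_opp 0) by (simpl; f_equal; ring).
    apply -> is_lim_seq_opp. exact Hw.
  - apply is_lim_seq_const.
Qed.
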